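(* Let $q$ be a prime power, $\mathbb{F}_q$ the finite field with $q$ elements, and $n\ge 1$. Let $C\subseteq \mathbb{F}_q^n$ be a linear code (a subspace) such that, for some real numbers $a_n\ge 1$ and $T$, \[ \frac{M_Q(C\setminus\{0_n\})}{|\mathcal{T}_Q^n|}\le a_n q^{-nT}\qquad\text{for all } Q\in\mathcal{P}_n(\mathbb{F}_q). \] Let $J\subseteq\mathbb{F}_q^n$ be a set of coset representatives for $\mathbb{F}_q^n/C$ (one representative per coset) such that the representative in $J$ of each coset $D$ attains the minimum of $H(\mathsf{P}_x)$ over $x\in D$. Then for every probability distribution $P_n$ on $\mathbb{F}_q^n$, \[ \mathbb{E}_{\boldsymbol{\pi}}\, P_n\big(\boldsymbol{\pi}(J)^{\mathrm c}\big)\le a_n\,|\mathcal{P}_n(\mathbb{F}_q)|\sum_{Q\in\mathcal{P}_n(\mathbb{F}_q)} P_n(\mathcal{T}_Q^n)\, q^{-n\,|T-H(Q)|^+}, \] where $\boldsymbol{\pi}$ is uniformly distributed over the symmetric group $\mathcal{S}_n$, $\mathrm{c}$ denotes complement in $\mathbb{F}_q^n$, and $|t|^+=\max\{t,0\}$.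
   Context: For $x\in\mathbb{F}_q^n$, the type $\mathsf{P}_x$ is the probability distribution on $\mathbb{F}_q$ with $n\mathsf{P}_x(u)$ equal to the number of coordinates of $x$ equal to $u$. $\mathcal{P}_n(\mathbb{F}_q)$ is the set of all types of sequences in $\mathbb{F}_q^n$. For a type $Q$, $\mathcal{T}_Q^n=\{y\in\mathbb{F}_q^n:\mathsf{P}_y=Q\}$, and for a set $B\subseteq\mathbb{F}_q^n$, $M_Q(B)=|\{y\in B:\mathsf{P}_y=Q\}|$. $H(Q)=-\sum_u Q(u)\log_q Q(u)$ (logarithms to base $q$). $0_n$ is the zero vector. The symmetric group $\mathcal{S}_n$ acts on $\mathbb{F}_q^n$ by $\pi((x_1,\dots,x_n))=(x_{\pi(1)},\dots,x_{\pi(n)})$, and $\pi(J)=\{\pi(x):x\in J\}$. *)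

(* Defs.v *)
From HB Require Import structures.
From mathcomp Require Import all_boot all_order all_algebra all_fingroup all_field.
From mathcomp Require Import all_classical all_reals all_analysis.
Set Implicit Arguments. Unset Strict Implicit. Unset Printing Implicit Defensive.
Import Order.TTheory GRing.Theory Num.Theory.
Local Open Scope ring_scope.

Section TypesDefs.
Variables (F : finFieldType) (n : nat).

(* A type is represented by its count function u |-> n * P(u) = #{i : x_i = u}. *)
Definition ptype (x : 'rV[F]_n) : {ffun F -> 'I_n.+1} :=
  [ffun u => inord #|[set i : 'I_n | x ord0 i == u]| ].

Definition types : {set {ffun F -> 'I_n.+1}} := [set ptype x | x : 'rV[F]_n].

Definition typeclass (Q : {ffun F -> 'I_n.+1}) : {set 'rV[F]_n} :=
  [set y | ptype y == Q].

Definition MQ (Q : {ffun F -> 'I_n.+1}) (B : {set 'rV[F]_n}) : nat :=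
  #|[set y in B | ptype y == Q]|.

Definition pact (s : 'S_n) (x : 'rV[F]_n) : 'rV[F]_n := \row_i x ord0 (s i).

Definition pimage (s : 'S_n) (J : {set 'rV[F]_n}) : {set 'rV[F]_n} :=
  [set pact s x | x in J].

Variable R : realType.

Definition tdist (Q : {ffun F -> 'I_n.+1}) (u : F) : R :=
  (nat_of_ord (Q u))%:R / n%:R.

Definition entropy (Q : {ffun F -> 'I_n.+1}) : R :=
  - \sum_(u : F) tdist Q u * (ln (tdist Q u) / ln (#|F|%:R)).

Definition Pr (P : {ffun 'rV[F]_n -> R}) (A : {set 'rV[F]_n}) : R :=
  \sum_(x in A) P x.

End TypesDefs.

(* Main.v *)
Require Import Defs.
From HB Require Import structures.
From mathcomp Require Import all_boot all_order all_algebra all_fingroup all_field.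
From mathcomp Require Import all_classical all_reals all_analysis.
From mathcomp Require Import ring lra.
Import Order.TTheory GRing.Theory Num.Theory.
Local Open Scope ring_scope.
Section Comb.
Variables (F : finFieldType) (n : nat).
Local Notation V := 'rV[F]_n.

Lemma pactM (s t : 'S_n) (x : V) : pact s (pact t x) = pact (s * t) x.
Proof. by apply/rowP => i; rewrite !mxE permM. Qed.

Lemma pact1 (x : V) : pact 1 x = x.
Proof. by apply/rowP => i; rewrite !mxE perm1. Qed.

Lemma pactB (s : 'S_n) (x y : V) : pact s (x - y) = pact s x - pact s y.
Proof. by apply/rowP => i; rewrite !mxE. Qed.

Lemma pact_inj (s : 'S_n) : injective (@pact F n s).
Proof.
move=> x y /(congr1 (@pact F n s^-1)); by rewrite !pactM mulVg !pact1.
Qed.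

Lemma card_ptype (x : V) u :
  #|[set i : 'I_n | x ord0 i == u]| = ptype x u :> nat.
Proof.
rewrite ffunE inordK // ltnS.
by apply: leq_trans (max_card _) _; rewrite card_ord.
Qed.

Lemma ptype_pact (s : 'S_n) (x : V) : ptype (pact s x) = ptype x.
Proof.
apply/ffunP => u; rewrite !ffunE. congr (inord _).
rewrite -(card_preimset [set i | x ord0 i == u] (@perm_inj _ s)); apply: eq_card => i.
by rewrite !inE mxE.
Qed.

Lemma ptype_orbit (c c' : V) : ptype c = ptype c' -> exists t : 'S_n, c' = pact t c.
Proof.
move=> eqt.
pose S (y : V) u := [set j : 'I_n | y ord0 j == u].
have cardS u : #|S c u| = #|S c' u| by rewrite !card_ptype eqt.
pose f (i : 'I_n) := nth i (enum (S c (c' ord0 i))) (index i (enum (S c' (c' ord0 i)))).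
have iin i : i \in enum (S c' (c' ord0 i)) by rewrite mem_enum inE.
have ilt i : (index i (enum (S c' (c' ord0 i))) < size (enum (S c (c' ord0 i))))%N.
  by rewrite -cardE cardS cardE index_mem.
have fin i : f i \in S c (c' ord0 i) by rewrite -mem_enum /f mem_nth.
have fval i : c ord0 (f i) = c' ord0 i by have := fin i; rewrite inE => /eqP.
have finj : injective f.
  move=> i j fij.
  have eu : c' ord0 i = c' ord0 j by rewrite -!fval fij.
  have := ilt i; have := ilt j; have := iin i; have := iin j.
  move: fij; rewrite /f -eu.
  set e := enum (S c (c' ord0 i)); set e' := enum (S c' (c' ord0 i)).
  move=> fij jin iin' ltj lti.
  rewrite (set_nth_default j) // in fij.
  move/eqP: fij; rewrite nth_uniq ?enum_uniq // => /eqP eqidx.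
  by rewrite -(nth_index i iin') eqidx (nth_index i jin).
exists (perm finj); apply/rowP => i; by rewrite mxE permE fval.
Qed.

End Comb.

Section Real.
Variables (R : realType) (F : finFieldType) (n : nat).
Hypothesis Hn : (1 <= n)%N.
Local Notation V := 'rV[F]_n.
Local Notation q := (#|F|%:R : R).

Lemma q_gt1 : 1 < q.
Proof. by rewrite ltr1n card_finNzRing_gt1. Qed.

Lemma q_gt0 : 0 < q.
Proof. exact: lt_trans ltr01 q_gt1. Qed.

Lemma powq (x : R) : q `^ x = expR (x * ln q).
Proof. by rewrite /powR gt_eqF // q_gt0. Qed.

Lemma powqD (x y : R) : q `^ x * q `^ y = q `^ (x + y).
Proof. by rewrite !powq -expRD mulrDl. Qed.

Lemma powq_ge1 (x : R) : 0 <= x -> 1 <= q `^ x.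
Proof.
move=> x0; rewrite powq -[X in X <= _]expR0 ler_expR; apply: mulr_ge0 => //.
apply: ln_ge0; by rewrite ler1n ltnW // card_finNzRing_gt1.
Qed.

Lemma sum_ind (T : finType) (A : {set T}) :
  \sum_(c : T) ((c \in A)%:R : R) = #|A|%:R.
Proof.
rewrite -sumr_const [RHS]big_mkcond /=; apply: eq_bigr => c _.
by case: (c \in A).
Qed.

Lemma sum_ptype (x : V) : (\sum_(u : F) (ptype x u : nat))%N = n.
Proof.
under eq_bigr do rewrite -card_ptype.
transitivity #|'I_n|; last by rewrite card_ord.
rewrite -sum1_card (partition_big (fun i => x ord0 i) xpredT) //=.
by apply: eq_bigr => u _; rewrite -sum1_card; apply: eq_bigl => i; rewrite inE.
Qed.


Lemma prod_type (Q : {ffun F -> 'I_n.+1}) (w : V) : ptype w = Q ->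
  q `^ (- (n%:R * entropy R Q)) = \prod_(i < n) tdist R Q (w ord0 i).
Proof.
move=> eQ.
have -> : \prod_(i < n) tdist R Q (w ord0 i) = \prod_(u : F) tdist R Q u ^+ Q u.
  rewrite (partition_big (fun i => w ord0 i) xpredT) //=.
  apply: eq_bigr => u _.
  transitivity (\prod_(i in [set i | w ord0 i == u]) tdist R Q u).
    apply: eq_big => i; first by rewrite inE.
    by move=> /eqP ->.
  by rewrite big_const iter_mulr_1 card_ptype eQ.
rewrite powq /entropy mulrN opprK mulr_sumr mulr_suml expR_sum.
apply: eq_bigr => u _.
have lnq : ln q != 0 by rewrite gt_eqF // ln_gt0 // q_gt1.
have n0 : (n%:R : R) != 0 by rewrite pnatr_eq0 -lt0n.
have -> : n%:R * (tdist R Q u * (ln (tdist R Q u) / ln q)) * ln q =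
          (Q u)%:R * ln (tdist R Q u).
  rewrite /tdist; field; by apply/andP.
case: (posnP (Q u)) => [-> | Qpos]; first by rewrite mul0r expR0 expr0.
have pgt0 : 0 < tdist R Q u by rewrite /tdist divr_gt0 // ltr0n.
rewrite mulr_natl -lnXn // lnK // posrE. exact: exprn_gt0.
Qed.

Lemma class_bound (Q : {ffun F -> 'I_n.+1}) : Q \in types F n ->
  \sum_(w : V | ptype w == Q) q `^ (- (n%:R * entropy R Q)) <= 1.
Proof.
case/imsetP => x0 _ eQ.
have p0 u : 0 <= tdist R Q u by rewrite /tdist divr_ge0.
rewrite (eq_bigr (fun w : V => \prod_(i < n) tdist R Q (w ord0 i))); last first.
  by move=> w /eqP; apply: prod_type.
apply: (@le_trans _ _ (\sum_(w : V) \prod_i tdist R Q (w ord0 i))).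
  rewrite [X in _ <= X](bigID (fun w => ptype w == Q)) /= lerDl.
  by apply: sumr_ge0 => w _; apply: prodr_ge0.
have s1 : \sum_u tdist R Q u = 1.
  rewrite /tdist -mulr_suml -natr_sum eQ sum_ptype divff //.
  by rewrite pnatr_eq0 -lt0n.
have -> : \sum_(w : V) \prod_i tdist R Q (w ord0 i) = \prod_(i < n) \sum_u tdist R Q u.
  rewrite bigA_distr_bigA (reindex (fun w : V => [ffun i => w ord0 i])) /=.
    by apply: eq_bigr => w _; apply: eq_bigr => i _; rewrite ffunE.
  apply: onW_bij; exists (fun f : {ffun 'I_n -> F} => \row_i f i).
    by move=> w; apply/rowP => i; rewrite !mxE ffunE.
  by move=> f; apply/ffunP => i; rewrite !ffunE mxE.
by rewrite s1 prodr_const expr1n.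
Qed.


Lemma cardA_bound (H : R) :
  #|[set w : V | entropy R (ptype w) <= H]|%:R <= #|types F n|%:R * q `^ (n%:R * H).
Proof.
set A := [set w : V | _].
rewrite -(sum_ind _ A).
apply: (@le_trans _ _ (\sum_(w : V) q `^ (n%:R * H) * q `^ (- (n%:R * entropy R (ptype w))))).
  apply: ler_sum => w _; case: (boolP (w \in A)) => wA.
    rewrite powqD; apply: powq_ge1.
    rewrite -mulrN -mulrDr mulr_ge0 // subr_ge0.
    by move: wA; rewrite inE.
  by rewrite mulr_ge0 // powR_ge0.
rewrite -mulr_sumr mulrC ler_wpM2r ?powR_ge0 //.
rewrite (partition_big (fun w => ptype w) (mem (types F n))) /=; last first.
  by move=> w _; apply: imset_f.
rewrite -[#|types F n|]sum1_card natr_sum; apply: ler_sum => Q QT.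
rewrite (eq_bigr (fun _ => q `^ (- (n%:R * entropy R Q)))); last first.
  by move=> w /eqP ->.
exact: class_bound.
Qed.


Lemma perx (C : {vspace V}) (a T : R) (Ha : 0 <= a)
  (HC : forall Q, Q \in types F n ->
     (MQ Q ([set x : V | x \in C] :\ 0))%:R / (#|typeclass Q|)%:R
       <= a * q `^ (- (n%:R * T)))
  (J : {set V})
  (HJrep : forall x : V, exists! j, j \in J /\ x - j \in C)
  (HJmin : forall j x : V, j \in J -> x - j \in C ->
     entropy R (ptype j) <= entropy R (ptype x)) (x : V) :
  \sum_(s : 'S_n) ((x \notin pimage s J)%:R : R) <=
  n`!%:R * (a * q `^ (- (n%:R * T))) *
    #|[set w : V | entropy R (ptype w) <= entropy R (ptype x)]|%:R.
Proof.
set H := entropy R (ptype x).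
set A := [set w : V | _].
set Cs := [set x : V | x \in C] :\ 0.
set aq := a * q `^ (- (n%:R * T)).
have aq0 : 0 <= aq by rewrite mulr_ge0 // powR_ge0.
pose g := fun c : V => \sum_(s : 'S_n) ((pact s x - c \in A)%:R : R).
have g0 c : 0 <= g c by apply: sumr_ge0 => s _; rewrite ler0n.
have gpact t c : g (pact t c) = g c.
  rewrite /g (reindex_inj (mulgI t)) /=; apply: eq_bigr => s _.
  by rewrite -pactM -pactB !inE ptype_pact.
have gtype c c' : ptype c = ptype c' -> g c' = g c.
  by case/ptype_orbit => t ->; apply: gpact.
have step1 : \sum_(s : 'S_n) ((x \notin pimage s J)%:R : R) <=
     \sum_(s : 'S_n) \sum_(c in Cs) ((pact s^-1 x - c \in A)%:R : R).
  apply: ler_sum => s _; case: (boolP (x \in pimage s J)) => xin /=.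
    by apply: sumr_ge0 => c _; rewrite ler0n.
  set y := pact s^-1 x.
  have yJ : y \notin J.
    apply: contra xin => yJ.
    have -> : x = pact s y by rewrite /y pactM mulgV pact1.
    exact: imset_f.
  case: (HJrep y) => j [[jJ yjC] _].
  have cCs : y - j \in Cs.
    rewrite !inE yjC andbT subr_eq0; apply: contra yJ => /eqP ->; exact: jJ.
  rewrite (bigD1 (y - j)) //=.
  have -> : y - (y - j) = j by rewrite opprB addrC subrK.
  have jA : j \in A.
    rewrite inE; have := HJmin j y jJ yjC; by rewrite /y ptype_pact.
  rewrite jA lerDl; by apply: sumr_ge0 => c _; rewrite ler0n.
apply: (le_trans step1).
have -> : \sum_(s : 'S_n) \sum_(c in Cs) ((pact s^-1 x - c \in A)%:R : R) =
          \sum_(c in Cs) g c.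
  rewrite exchange_big; apply: eq_bigr => c _.
  by rewrite /g [RHS](reindex_inj invg_inj).
have step3 : \sum_(c in Cs) g c <= aq * \sum_(c : V) g c.
  rewrite (partition_big (fun c => ptype c) xpredT) //=.
  rewrite [X in _ <= _ * X](partition_big (fun c => ptype c) xpredT) // mulr_sumr.
  apply: ler_sum => Q _.
  rewrite (eq_bigl (fun c => c \in [set y in Cs | ptype y == Q])); last first.
    by move=> c; rewrite [RHS]inE.
  rewrite [X in _ <= _ * X](eq_bigl (fun c => c \in typeclass Q)); last first.
    by move=> c; rewrite [RHS]inE.
  case: (pickP (fun c : V => ptype c == Q)) => [c0 /eqP ec0 | none]; last first.
    rewrite big1; last by move=> c; rewrite inE none andbF.
    rewrite big1 ?mulr0 //; by move=> c; rewrite inE none.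
  rewrite (eq_bigr (fun _ => g c0)); last first.
    by move=> c; rewrite inE => /andP[_ /eqP e]; apply: gtype; rewrite e ec0.
  rewrite [X in _ <= _ * X](eq_bigr (fun _ => g c0)); last first.
    by move=> c; rewrite inE => /eqP e; apply: gtype; rewrite e ec0.
  rewrite !sumr_const.
  have QT : Q \in types F n by rewrite -ec0; apply: imset_f.
  have Tpos : (0 < #|typeclass Q|)%N.
    by apply/card_gt0P; exists c0; rewrite inE ec0.
  have := HC Q QT; rewrite ler_pdivrMr ?ltr0n // => HM.
  rewrite -(mulr_natr (g c0)) -(mulr_natr (g c0)) mulrCA; apply: ler_wpM2l; first exact: g0.
  exact: HM.
apply: (le_trans step3).
have step4 : \sum_(c : V) g c = n`!%:R * #|A|%:R.
  rewrite /g exchange_big /=.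
  rewrite (eq_bigr (fun _ => #|A|%:R)); last first.
    move=> s _; by rewrite -(sum_ind _ A) [RHS](reindex_inj (subrI (pact s x))).
  by rewrite sumr_const card_Sn mulr_natl.
by rewrite step4 mulrA (mulrC aq).
Qed.

End Real.

Theorem lemma4 (R : realType) (F : finFieldType) (n : nat) (Hn : (1 <= n)%N)
  (C : {vspace 'rV[F]_n}) (a_n T : R) (Ha : 1 <= a_n)
  (HC : forall Q, Q \in types F n ->
     (MQ Q ([set x : 'rV[F]_n | x \in C] :\ 0))%:R / (#|typeclass Q|)%:R
       <= a_n * (#|F|%:R) `^ (- (n%:R * T)))
  (J : {set 'rV[F]_n})
  (HJrep : forall x : 'rV[F]_n, exists! j, j \in J /\ x - j \in C)
  (HJmin : forall j x : 'rV[F]_n, j \in J -> x - j \in C ->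
     entropy R (ptype j) <= entropy R (ptype x))
  (P : {ffun 'rV[F]_n -> R})
  (HP0 : forall x, 0 <= P x) (HP1 : \sum_x P x = 1) :
  (n`!%:R)^-1 * \sum_(s : 'S_n) Pr P (~: pimage s J)
    <= a_n * (#|types F n|)%:R *
       \sum_(Q in types F n)
          Pr P (typeclass Q) * (#|F|%:R) `^ (- (n%:R * Num.max (T - entropy R Q) 0)).
Proof.
set q : R := #|F|%:R.
pose w := fun Q : {ffun F -> 'I_n.+1} => q `^ (- (n%:R * Num.max (T - entropy R Q) 0)).
set K := a_n * #|types F n|%:R.
have a0 : 0 <= a_n by apply: le_trans Ha; rewrite ler01.
have nf0 : (0 : R) < n`!%:R by rewrite ltr0n fact_gt0.
pose G := fun x : 'rV[F]_n => \sum_(s : 'S_n) ((x \notin pimage s J)%:R : R).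
have Gb x : G x <= n`!%:R * (K * w (ptype x)).
  have tx : ptype x \in types F n by apply: imset_f.
  have t1 : (1 : R) <= #|types F n|%:R.
    by rewrite ler1n; apply/card_gt0P; exists (ptype x).
  rewrite /w; case: (leP (T - entropy R (ptype x)) 0) => hT.
    rewrite mulr0 oppr0 powRr0 mulr1.
    apply: (@le_trans _ _ n`!%:R).
      rewrite /G -card_Sn -sumr_const; apply: ler_sum => s _.
      by case: (_ \notin _).
    rewrite ler_pMr // /K -[X in X <= _]mulr1; apply: ler_pM => //.

  apply: le_trans (@perx R F n C a_n T a0 HC J HJrep HJmin x) _.
  set H := entropy R (ptype x).
  set Ab := #|[set _ | _]|%:R.
  have hA : Ab <= #|types F n|%:R * q `^ (n%:R * H) by exact: (@cardA_bound R F n Hn H).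
  have eq : q `^ (- (n%:R * T)) * q `^ (n%:R * H) = q `^ (- (n%:R * (T - H))).
    rewrite (@powqD R F); congr (_ `^ _); rewrite mulrBr opprB addrC //.
  rewrite -mulrA ler_wpM2l ?ler0n // /K -eq.
  have qT0 : 0 <= a_n * q `^ (- (n%:R * T)) by rewrite mulr_ge0 // powR_ge0.
  apply: le_trans (ler_wpM2l qT0 hA) _.
  rewrite le_eqVlt; apply/orP; left; apply/eqP; ring.
have eP s : Pr P (~: pimage s J) = \sum_x P x * ((x \notin pimage s J)%:R : R).
  rewrite /Pr big_mkcond; apply: eq_bigr => x _; rewrite inE.
  by case: (_ \in _); rewrite ?mulr1 ?mulr0.
under eq_bigr do rewrite eP.
rewrite exchange_big.
have -> : \sum_x \sum_(s : 'S_n) P x * ((x \notin pimage s J)%:R : R) = \sum_x P x * G x.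
  by apply: eq_bigr => x _; rewrite mulr_sumr.
rewrite [X in X <= _]mulr_sumr.
apply: (@le_trans _ _ (\sum_x P x * (K * w (ptype x)))).
  apply: ler_sum => x _; rewrite mulrCA ler_wpM2l // ler_pdivrMl //; exact: Gb.
rewrite le_eqVlt; apply/orP; left; apply/eqP.
under eq_bigr do rewrite mulrCA.
rewrite -mulr_sumr; congr (K * _).
rewrite (partition_big (fun x => ptype x) (mem (types F n))); last first.
  by move=> x _; apply: imset_f.
apply: eq_bigr => Q _; rewrite /Pr mulr_suml.
apply: eq_big => x; first by rewrite [RHS]inE.
by move=> /eqP ->.
Qed.
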